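(* For every integer $q\ge1$ and every integer $k\ge0$ with $k\ne q+2$, \[ \frac{q^{2}}{8(2k-2q-3)(k-q-2)}S_{q}(k)+\frac{4kq-4q^{2}+2k-7q-4}{4(2k-2q-3)(k-q-2)}\, S_{q+1}(k)+S_{q+2}(k)=0, \] where $S_q(k)=\sum_{l_1,l_2\in\mathbb Z}H_q(l_1,l_2,k)$.
   Context: $(z)_k=z(z+1)\cdots(z+k-1)$ denotes the rising factorial. For integers $l_1,l_2,k$ and $q\ge1$, \[ H_q(l_{1},l_{2},k)=\frac{(-1)^{l_1+l_2}\left(-\frac{1}{2}\right)_{l_1} \left(-\frac{1}{2}\right)_{l_2} \left(\frac{1}{2}\right)_{q-l_{1}} \left(\frac{1}{2}\right)_{q-l_{2}}}{(2q-l_{1}-l_{2}-k)!\,(l_{2}-l_{1}+k)!\,(l_{1}-l_{2}+k)!\,(l_{1}+l_{2}-k)!}, \] where Pochhammer symbols and factorials are expressed via the Gamma function, with $1/\Gamma$ vanishing at non-positive integers (so only finitely many terms are non-zero). *)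

(* Defs.v *)
From mathcomp Require Import all_boot all_order all_algebra.
Set Implicit Arguments. Unset Strict Implicit. Unset Printing Implicit Defensive.
Import Order.TTheory GRing.Theory Num.Theory.
Local Open Scope ring_scope.

(* Rising factorial (a)_n = Gamma(a+n)/Gamma(a) for an integer index n.
   n >= 0 : a (a+1) ... (a+n-1);
   n = -(m+1) < 0 : 1 / ((a-1)(a-2)...(a-m-1)). *)
Definition poch {R : fieldType} (a : R) (n : int) : R :=
  match n with
  | Posz m => \prod_(i < m) (a + i%:R)
  | Negz m => (\prod_(i < m.+1) (a - (i.+1)%:R))^-1
  end.

(* 1 / n! = 1 / Gamma(n+1) for an integer n, vanishing for n < 0. *)
Definition rfact {R : fieldType} (n : int) : R :=
  match n with
  | Posz m => (m`!%:R)^-1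
  | Negz _ => 0
  end.

Definition H {R : fieldType} (q : nat) (l1 l2 k : int) : R :=
  (-1) ^ (l1 + l2) * poch (- 2^-1) l1 * poch (- 2^-1) l2
  * poch (2^-1) (q%:Z - l1) * poch (2^-1) (q%:Z - l2)
  * rfact (2 * q%:Z - l1 - l2 - k) * rfact (l2 - l1 + k)
  * rfact (l1 - l2 + k) * rfact (l1 + l2 - k).

(* S_q(k) = sum over all (l1,l2) in Z^2 of H_q(l1,l2,k).  H_q(.,.,k) is
   supported in [0,q]^2, so the sum is taken over the
   window [-(q+k), q+k]^2, which contains the whole support. *)
Definition S {R : fieldType} (q k : nat) : R :=
  let N := (q + k)%N in
  \sum_(i < (N + N).+1) \sum_(j < (N + N).+1)
     H q (i%:Z - N%:Z) (j%:Z - N%:Z) k%:Z.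

(* Main.v *)
Require Import Defs.
From mathcomp Require Import all_boot all_order all_algebra.
From mathcomp Require Import ring lra zify.
Set Implicit Arguments. Unset Strict Implicit. Unset Printing Implicit Defensive.
Import Order.TTheory GRing.Theory Num.Theory.
Local Open Scope ring_scope.

(* Proof strategy: S_q(k) = LAM_q(u^(2q-2k) v^(2k)) / ((2q-2k)! (2k)!) where
   u = 1 + XY, v = X + Y and LAM_q is the tensor square of a linear functional
   lam_q annihilating the image of L f = (1 - X^2) f' + (2q-2) X f.
   This gives S_q(k) = 0 for k >= 2 and closed forms for k = 0, 1. *)

Definition pn {R : fieldType} (a : R) (n : nat) : R := \prod_(i < n) (a + i%:R).
Definition mu {R : fieldType} (q i : nat) : R :=
  (-1) ^+ (q - i) * pn (- 2^-1) (q - i) * pn (2^-1) i.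
Definition lc {R : fieldType} (q n : nat) : R :=
  if odd n then 0 else if (2 * q < n)%N then 0 else mu q n./2.
Definition lam {R : fieldType} (q : nat) (p : {poly R}) : R :=
  \sum_(i < (2 * q).+1) p`_i * lc q i.
Definition LAM {R : fieldType} (q : nat) (P : {poly {poly R}}) : R :=
  \sum_(i < (2 * q).+1) lam q P`_i * lc q i.

Lemma pnS {R : fieldType} (a : R) n : pn a n.+1 = pn a n * (a + n%:R).
Proof. by rewrite /pn big_ord_recr. Qed.

Lemma lc_odd {R : fieldType} q n : odd n -> lc q n = 0 :> R.
Proof. by rewrite /lc => ->. Qed.

Lemma lc_big {R : fieldType} q n : (2 * q < n)%N -> lc q n = 0 :> R.
Proof. by rewrite /lc => ->; case: ifP. Qed.

Lemma lc_even {R : fieldType} q i : (i <= q)%N -> lc q i.*2 = mu q i :> R.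
Proof.
move=> hi; rewrite /lc odd_double /= doubleK.
have -> : (2 * q < i.*2)%N = false by apply/negbTE; rewrite -leqNgt; lia.
by [].
Qed.

Lemma two_neq0 {R : realFieldType} : (2 : R) != 0.
Proof. by rewrite pnatr_eq0. Qed.

Lemma lc_rec {R : realFieldType} q j : (j < 2 * q)%N ->
  lc q j.-1 *+ j - lc q j.+1 *+ j + lc q j.+1 *+ (2 * q) - lc q j.+1 *+ 2 = 0 :> R.
Proof.
move=> hj.
case/boolP: (odd j) => oj.
- have ej : j = (j./2).*2.+1 by rewrite -[LHS]odd_double_half oj.
  move: hj; rewrite ej; move: (j./2) => i hj.
  have hiq : (i.+1 <= q)%N by rewrite -mul2n in hj; lia.
  rewrite (lc_even (q:=q) (i:=i)) ?(ltnW hiq) //.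
  have -> : (i.*2.+2 = (i.+1).*2 :> nat) by rewrite doubleS.
  rewrite lc_even //.
  rewrite /mu.
  have [r hr] : exists r, q = (i + r).+1 by exists (q - i.+1)%N; lia.
  rewrite hr.
  have -> : ((i + r).+1 - i = r.+1)%N by lia.
  have -> : ((i + r).+1 - i.+1 = r)%N by lia.
  rewrite !pnS exprS -!mul2n.
  have h2 := @two_neq0 R.
  by field.
- rewrite (@lc_odd R q j.+1) /=; last by rewrite oj.
  case: j hj oj => [|j] hj oj; first by rewrite !(mul0rn, mulr0n, subr0, addr0, add0r, sub0r, oppr0).
  rewrite lc_odd //= ?mul0rn; last by move: oj => /=; rewrite negbK.
  by rewrite !(mul0rn, mulr0n, subr0, addr0, add0r, sub0r, oppr0).
Qed.

Lemma sum_delta {R : fieldType} (n c : nat) (f : nat -> R) :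
  \sum_(i < n) (if (i == c :> nat) then f i else 0) = if (c < n)%N then f c else 0.
Proof.
rewrite -(big_mkord xpredT (fun i => if i == c then f i else 0)).
elim: n => [|n IH]; first by rewrite big_geq.
rewrite big_nat_recr //= IH.
case: eqP => [->|e]; first by rewrite ltnn add0r ltnSn.
rewrite addr0; case: (ltngtP c n) => h.
- by rewrite (ltn_trans h (ltnSn n)).
- by case: ifP => // h'; lia.
- by case: e.
Qed.

Lemma lamD {R : fieldType} q (p r : {poly R}) : lam q (p + r) = lam q p + lam q r.
Proof. by rewrite /lam -big_split /=; apply: eq_bigr => i _; rewrite coefD mulrDl. Qed.
Lemma lam0 {R : fieldType} q : lam q (0 : {poly R}) = 0.
Proof. by rewrite /lam big1 // => i _; rewrite coef0 mul0r. Qed.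
Lemma lamN {R : fieldType} q (p : {poly R}) : lam q (- p) = - lam q p.
Proof. by rewrite /lam -sumrN; apply: eq_bigr => i _; rewrite coefN mulNr. Qed.
Lemma lamB {R : fieldType} q (p r : {poly R}) : lam q (p - r) = lam q p - lam q r.
Proof. by rewrite lamD lamN. Qed.
Lemma lamMn {R : fieldType} q (p : {poly R}) n : lam q (p *+ n) = lam q p *+ n.
Proof. elim: n => [|n IH]; first by rewrite !mulr0n lam0. by rewrite !mulrS lamD IH. Qed.
Lemma lamZ {R : fieldType} q c (p : {poly R}) : lam q (c *: p) = c * lam q p.
Proof. by rewrite /lam mulr_sumr; apply: eq_bigr => i _; rewrite coefZ mulrA. Qed.
Lemma lamCM {R : fieldType} q c (p : {poly R}) : lam q (c%:P * p) = c * lam q p.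
Proof. by rewrite mul_polyC lamZ. Qed.
Lemma lam_sum {R : fieldType} q (I : Type) (r : seq I) (P : pred I) (F : I -> {poly R}) :
  lam q (\sum_(i <- r | P i) F i) = \sum_(i <- r | P i) lam q (F i).
Proof. exact: (big_morph _ (lamD q) (lam0 q)). Qed.
Lemma lamZXn {R : fieldType} q c n : lam q (c *: 'X^n) = c * lc q n :> R.
Proof.
rewrite lamZ /lam; congr (_ * _).
under eq_bigr => i _ do rewrite coefXn mulr_natl mulrb.
rewrite sum_delta; case: ifP => // h; rewrite lc_big //; lia.
Qed.
Lemma lamXn {R : fieldType} q n : lam q 'X^n = lc q n :> R.
Proof. by rewrite -[X in lam q X]scale1r lamZXn mul1r. Qed.
Lemma lam1 {R : fieldType} q : lam q 1 = lc q 0 :> R.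
Proof. by rewrite -(expr0 'X) lamXn. Qed.

Lemma LAMD {R : fieldType} q (p r : {poly {poly R}}) : LAM q (p + r) = LAM q p + LAM q r.
Proof. by rewrite /LAM -big_split /=; apply: eq_bigr => i _; rewrite coefD lamD mulrDl. Qed.
Lemma LAM0 {R : fieldType} q : LAM q (0 : {poly {poly R}}) = 0.
Proof. by rewrite /LAM big1 // => i _; rewrite coef0 lam0 mul0r. Qed.
Lemma LAMN {R : fieldType} q (p : {poly {poly R}}) : LAM q (- p) = - LAM q p.
Proof. by rewrite /LAM -sumrN; apply: eq_bigr => i _; rewrite coefN lamN mulNr. Qed.
Lemma LAMB {R : fieldType} q (p r : {poly {poly R}}) : LAM q (p - r) = LAM q p - LAM q r.
Proof. by rewrite LAMD LAMN. Qed.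
Lemma LAMMn {R : fieldType} q (p : {poly {poly R}}) n : LAM q (p *+ n) = LAM q p *+ n.
Proof. elim: n => [|n IH]; first by rewrite !mulr0n LAM0. by rewrite !mulrS LAMD IH. Qed.
Lemma LAM_sum {R : fieldType} q (I : Type) (r : seq I) (P : pred I) (F : I -> {poly {poly R}}) :
  LAM q (\sum_(i <- r | P i) F i) = \sum_(i <- r | P i) LAM q (F i).
Proof. exact: (big_morph _ (LAMD q) (LAM0 q)). Qed.
Lemma LAMZXn {R : fieldType} q (c : {poly R}) n : LAM q (c *: 'X^n) = lam q c * lc q n.
Proof.
rewrite /LAM.
under eq_bigr => i _ do rewrite coefZ coefXn mulr_natr mulrb (fun_if (lam q)) lam0.
under eq_bigr => i _ do rewrite (fun_if (fun x => x * lc q i)) mul0r.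
rewrite (sum_delta _ _ (fun i => lam q c * lc q i)); case: ifP => // h; rewrite lc_big ?mulr0 //; lia.
Qed.

Definition Lop {A : comNzRingType} (q : nat) (P : {poly A}) : {poly A} :=
  (1 - 'X^2) * P^`() + ('X * P) *+ (2 * q) - ('X * P) *+ 2.

Lemma LopD {A : comNzRingType} q (P Q : {poly A}) : Lop q (P + Q) = Lop q P + Lop q Q.
Proof. rewrite /Lop derivD !mulrDr !mulrnDl; ring. Qed.
Lemma Lop0 {A : comNzRingType} q : Lop q (0 : {poly A}) = 0.
Proof. by rewrite /Lop deriv0 !mulr0 !mul0rn !(addr0, subr0). Qed.
Lemma Lop_sum {A : comNzRingType} q (I : Type) (r : seq I) (P : pred I) (F : I -> {poly A}) :
  Lop q (\sum_(i <- r | P i) F i) = \sum_(i <- r | P i) Lop q (F i).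
Proof. exact: (big_morph _ (LopD q) (Lop0 q)). Qed.
Lemma LopZ {A : comNzRingType} q (c : A) (P : {poly A}) : Lop q (c *: P) = c *: Lop q P.
Proof.
by rewrite /Lop derivZ -!scalerAr !scalerMnr -scalerDr -scalerBr.
Qed.
Lemma Lop_Xn {A : comNzRingType} q j :
  Lop q ('X^j : {poly A}) = 'X^(j.-1) *+ j - 'X^(j.+1) *+ j + 'X^(j.+1) *+ (2 * q) - 'X^(j.+1) *+ 2.
Proof.
rewrite /Lop derivXn; case: j => [|j] /=.
  by rewrite !mulr0n mulr0 add0r subr0 add0r expr1 expr0 mulr1.
rewrite !exprS -!mulrnAr; ring.
Qed.

Lemma LAM_Lop {R : realFieldType} q (P : {poly {poly R}}) :
  (size P <= 2 * q)%N -> LAM q (Lop q P) = 0.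
Proof.
move=> hs.
rewrite -[P]coefK poly_def Lop_sum LAM_sum; apply: big1 => j _.
rewrite LopZ Lop_Xn !scalerBr !scalerDr ?scalerN -!scalerMnr !LAMB !LAMD ?LAMN !LAMMn !LAMZXn.
have hj : (j < 2 * q)%N by apply: leq_trans hs.
rewrite -[RHS](mulr0 (lam q P`_j)) -(lc_rec hj); ring.
Qed.

Lemma lam_Lop {R : realFieldType} q (p : {poly R}) :
  (size p <= 2 * q)%N -> lam q (Lop q p) = 0.
Proof.
move=> hs.
rewrite -[p]coefK poly_def Lop_sum lam_sum; apply: big1 => j _.
rewrite LopZ Lop_Xn !scalerBr !scalerDr ?scalerN -!scalerMnr !lamB !lamD ?lamN !lamMn !lamZXn.
have hj : (j < 2 * q)%N by apply: leq_trans hs.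
rewrite -[RHS](mulr0 p`_j) -(lc_rec hj); ring.
Qed.



Definition uu {R : fieldType} : {poly {poly R}} := 1 + 'X * 'Y.
Definition vv {R : fieldType} : {poly {poly R}} := 'X + 'Y.

Lemma deriv_uu {R : fieldType} : (@uu R)^`() = 'Y.
Proof. by rewrite /uu derivD derivC derivM derivX derivC mulr0 addr0 mul1r add0r. Qed.
Lemma deriv_vv {R : fieldType} : (@vv R)^`() = 1.
Proof. by rewrite /vv derivD derivX derivC addr0. Qed.

Lemma Lop_uv {R : fieldType} q a b :
  Lop q ((@uu R) ^+ a * vv ^+ b) =
    uu ^+ (a.-1) * vv ^+ (b.+1) *+ a + uu ^+ (a.+1) * vv ^+ (b.-1) *+ b
    + 'X * uu ^+ a * vv ^+ b *+ (2 * q) - 'X * uu ^+ a * vv ^+ b *+ (2 + a + b).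
Proof.
rewrite /Lop derivM !deriv_exp deriv_uu deriv_vv.
case: a => [|a]; case: b => [|b] /=; rewrite ?mulr0n ?mul0r ?mulr0 ?expr0 ?add0r ?addr0;
  rewrite ?exprS /uu /vv; ring.
Qed.

Lemma Lop_mulY {R : fieldType} q (P : {poly {poly R}}) : Lop q ('Y * P) = 'Y * Lop q P.
Proof. rewrite /Lop deriv_mulC; ring. Qed.

Lemma size_Y {R : fieldType} : (size ('Y : {poly {poly R}}) <= 1)%N.
Proof. exact: size_polyC_leq1. Qed.

Lemma size_uv {R : fieldType} a b : (size ((@uu R) ^+ a * vv ^+ b)%R <= (a + b).+1)%N.
Proof.
have hu : (size (@uu R) <= 2)%N.
  rewrite /uu; apply: leq_trans (size_polyD _ _) _; rewrite geq_max size_poly1 /=.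
  apply: leq_trans (size_polyMleq _ _) _; rewrite size_polyX add2n /= ltnS.
  exact: size_Y.
have hv : (size (@vv R) <= 2)%N.
  rewrite /vv; apply: leq_trans (size_polyD _ _) _; rewrite geq_max size_polyX /=.
  exact: leq_trans (size_Y) _.
apply: leq_trans (size_polyMleq _ _) _.
have h1 := size_poly_exp_leq (@uu R) a.
have h2 := size_poly_exp_leq (@vv R) b.
have h3 : ((size (@uu R)).-1 * a <= a)%N by rewrite -[X in (_ <= X)%N]mul1n leq_mul2r; lia.
have h4 : ((size (@vv R)).-1 * b <= b)%N by rewrite -[X in (_ <= X)%N]mul1n leq_mul2r; lia.
lia.
Qed.

Lemma size_mulY {R : fieldType} (P : {poly {poly R}}) : (size ('Y * P)%R <= size P)%N.
Proof.
apply: leq_trans (size_polyMleq _ _) _.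
by rewrite -subn1 leq_subLR leq_add2r; exact: size_Y.
Qed.

Lemma LAM_swap {R : fieldType} q (P : {poly {poly R}}) : LAM q (swapXY P) = LAM q P.
Proof.
rewrite /LAM /lam.
under eq_bigr => i _ do rewrite mulr_suml.
under [RHS]eq_bigr => i _ do rewrite mulr_suml.
rewrite exchange_big /=; apply: eq_bigr => i _; apply: eq_bigr => j _.
by rewrite coef_swapXY mulrAC.
Qed.

Lemma swap_uu {R : fieldType} : swapXY (@uu R) = uu.
Proof. by rewrite /uu rmorphD rmorph1 rmorphM /= swapXY_X swapXY_Y mulrC. Qed.
Lemma swap_vv {R : fieldType} : swapXY (@vv R) = vv.
Proof. by rewrite /vv rmorphD /= swapXY_X swapXY_Y addrC. Qed.

Lemma LAM_Y_sym {R : fieldType} q (P : {poly {poly R}}) :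
  swapXY P = P -> LAM q ('Y * P) = LAM q ('X * P).
Proof. by move=> hP; rewrite -LAM_swap rmorphM /= swapXY_Y hP. Qed.

Lemma LAM_sep {R : fieldType} q (p r : {poly R}) :
  LAM q (p ^:P * r%:P) = lam q p * lam q r.
Proof.
rewrite /LAM [lam q p]/lam mulr_suml; apply: eq_bigr => i _.
rewrite coefMC coef_map /= lamCM; ring.
Qed.



Definition TT {R : fieldType} q a b : R := LAM q ((@uu R) ^+ a * vv ^+ b).

Lemma sym_uv {R : fieldType} a b : swapXY ((@uu R) ^+ a * vv ^+ b) = uu ^+ a * vv ^+ b.
Proof. by rewrite rmorphM !rmorphXn /= swap_uu swap_vv. Qed.

Lemma LAM_Y2 {R : fieldType} q (P : {poly {poly R}}) :
  swapXY P = P -> LAM q ('Y * P) *+ 2 = LAM q (vv * P).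
Proof. by move=> hP; rewrite /vv mulrDl LAMD mulr2n {1}LAM_Y_sym // addrC. Qed.
Lemma LAM_X2 {R : fieldType} q (P : {poly {poly R}}) :
  swapXY P = P -> LAM q ('X * P) *+ 2 = LAM q (vv * P).
Proof. by move=> hP; rewrite -LAM_Y2 // LAM_Y_sym. Qed.

Lemma RB {R : realFieldType} q a b : ((a + b).+1 <= 2 * q)%N ->
  (TT q a.-1 b.+1 *+ a + TT q a.+1 b.-1 *+ b) *+ 2 + TT q a b.+1 *+ (2 * q)
  = TT q a b.+1 *+ (2 + a + b) :> R.
Proof.
move=> hab.
have h := LAM_Lop (q:=q) (P := (@uu R) ^+ a * vv ^+ b) (leq_trans (size_uv a b) hab).
rewrite Lop_uv LAMB [X in _ - X]LAMMn !LAMD !LAMMn in h.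
move/eqP: h; rewrite subr_eq0 => /eqP h.
have hX : LAM q ('X * (@uu R) ^+ a * vv ^+ b) *+ 2 = TT q a b.+1.
  by rewrite -mulrA LAM_X2 ?sym_uv // /TT exprS; congr LAM; ring.
rewrite -hX -!mulrnA [(2 * (2 * q))%N]mulnC [(2 * (2 + a + b))%N]mulnC !mulrnA.
rewrite -h /TT !mulrnDl -!mulrnA -mulrnDr; congr (_ + _ *+ _); lia.
Qed.

Lemma RA {R : realFieldType} q a b : ((a + b).+1 <= 2 * q)%N ->
  TT q a.-1 b.+2 *+ a + TT q a.+1 b.-1.+1 *+ b + (TT q a.+1 b - TT q a b) *+ 2 *+ (2 * q)
  = (TT q a.+1 b - TT q a b) *+ 2 *+ (2 + a + b) :> R.
Proof.
move=> hab.
have hs := leq_trans (@size_mulY R _) (leq_trans (@size_uv R a b) hab).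
have h := LAM_Lop (q:=q) (P := 'Y * ((@uu R) ^+ a * vv ^+ b)) hs.
rewrite Lop_mulY Lop_uv mulrBr LAMB [X in _ - LAM q X]mulrnAr [X in _ - X]LAMMn !mulrDr !LAMD !mulrnAr !LAMMn in h.
move/eqP: h; rewrite subr_eq0 => /eqP h.
have h1 : LAM q ('Y * ((@uu R) ^+ (a.-1) * vv ^+ (b.+1))) *+ 2 = TT q a.-1 b.+2.
  by rewrite LAM_Y2 ?sym_uv // /TT [in RHS](exprS vv); congr LAM; ring.
have h2 : LAM q ('Y * ((@uu R) ^+ (a.+1) * vv ^+ (b.-1))) *+ 2 = TT q a.+1 b.-1.+1.
  by rewrite LAM_Y2 ?sym_uv // /TT [in RHS](exprS vv); congr LAM; ring.
have h3 : LAM q ('Y * ('X * (@uu R) ^+ a * vv ^+ b)) = TT q a.+1 b - TT q a b.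
  by rewrite /TT -LAMB exprS; congr LAM; rewrite /uu; ring.
rewrite -h1 -h2 -h3 -!mulrnA.
rewrite [(2 * (2 * q))%N]mulnC [(2 * (2 + a + b))%N]mulnC [(2 * a)%N]mulnC [(2 * b)%N]mulnC !mulrnA.
by rewrite -[_ *+ 2 *+ q]mulrnA -!mulrnDl h.
Qed.

Lemma mulrn_inj {R : numDomainType} (x y : R) n : (0 < n)%N -> x *+ n = y *+ n -> x = y.
Proof.
move=> hn /eqP; rewrite -subr_eq0 -mulrnBl mulrn_eq0 => /orP [/eqP hn0 | ].
  by move: hn; rewrite hn0.
by rewrite subr_eq0 => /eqP.
Qed.

Definition UU {R : fieldType} q i : R := TT q (2 * q - 1 - 2 * i) (2 * i).
Definition WW {R : fieldType} q k : R := TT q (2 * q - 2 * k) (2 * k).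

Lemma U_rec {R : realFieldType} q i : (i.+2 <= q)%N ->
  UU q i.+1 *+ (2 * q - 2 - 2 * i) + UU q i *+ (2 * i) = 0 :> R.
Proof.
move=> hi.
have h := @RA R q (2 * q - 2 - 2 * i) (2 * i) ltac:(lia).
rewrite (_ : (2 + (2 * q - 2 - 2 * i) + 2 * i = 2 * q)%N) in h; last by lia.
move/eqP: h; rewrite -subr_eq0 addrK => /eqP.
rewrite (_ : ((2 * q - 2 - 2 * i).-1 = 2 * q - 1 - 2 * i.+1)%N); last by lia.
rewrite (_ : ((2 * i).+2 = 2 * i.+1)%N); last by lia.
rewrite (_ : ((2 * q - 2 - 2 * i).+1 = 2 * q - 1 - 2 * i)%N); last by lia.
case: i hi => [|i] hi.
  by rewrite !muln0 !mulr0n !addr0 => ->.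
by rewrite (_ : ((2 * i.+1).-1.+1 = 2 * i.+1)%N); last by lia.
Qed.

Lemma U_zero {R : realFieldType} q i : (1 <= i)%N -> (i < q)%N -> UU q i = 0 :> R.
Proof.
elim: i => [//|i IH] _ hi.
have h := @U_rec R q i hi.
case: i IH hi h => [|i] IH hi h.
  rewrite muln0 mulr0n addr0 in h.
  by apply: (@mulrn_inj R _ _ (2 * q - 2 - 2 * 0)); [lia | rewrite h mul0rn].
rewrite IH // ?mul0rn ?addr0 in h; last by lia.
by apply: (@mulrn_inj R _ _ (2 * q - 2 - 2 * i.+1)); [lia | rewrite h mul0rn].
Qed.

Lemma W_rel {R : realFieldType} q k : (1 <= k)%N -> (k <= q)%N ->
  WW q k = (UU q k *+ (2 * q - 2 * k) + UU q k.-1 *+ (2 * k - 1)) *+ 2 :> R.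
Proof.
move=> hk1 hkq.
have h := @RB R q (2 * q - 2 * k) (2 * k - 1) ltac:(lia).
rewrite (_ : (2 + (2 * q - 2 * k) + (2 * k - 1) = (2 * q).+1)%N) in h; last by lia.
rewrite [X in _ = X]mulrSr addrC in h; move/GRing.addrI: h.
rewrite (_ : ((2 * k - 1).+1 = 2 * k)%N); last by lia.
rewrite (_ : ((2 * q - 2 * k).-1 = 2 * q - 1 - 2 * k)%N); last by lia.
rewrite (_ : ((2 * q - 2 * k).+1 = 2 * q - 1 - 2 * k.-1)%N); last by lia.
rewrite (_ : ((2 * k - 1).-1 = 2 * k.-1)%N); last by lia.
by rewrite /WW /UU => <-.
Qed.

Lemma W0_rel {R : realFieldType} q : (1 <= q)%N ->
  WW q 1 *+ (2 * q - 1) = (WW q 0 - UU q 0) *+ 2 :> R.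
Proof.
move=> hq.
have h := @RA R q (2 * q - 1) 0 ltac:(lia).
rewrite (_ : (2 + (2 * q - 1) + 0 = (2 * q).+1)%N) in h; last by lia.
rewrite mulr0n addr0 [in RHS]mulrSr addrC in h; move/GRing.addrI: h.
rewrite (_ : ((2 * q - 1).-1 = 2 * q - 2 * 1)%N); last by lia.
rewrite (_ : ((2 * q - 1).+1 = 2 * q - 2 * 0)%N); last by lia.
by rewrite /WW /UU !muln0 !subn0.
Qed.

Lemma WW_zero {R : realFieldType} q k : (2 <= k)%N -> (k <= q)%N -> WW q k = 0 :> R.
Proof.
move=> h2 hq; rewrite W_rel; [|lia|lia].
rewrite (@U_zero R q k.-1); [|lia|lia].
case: (ltngtP k q) => hkq; last by rewrite hkq subnn mulr0n add0r mul0rn mul0rn.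
- by rewrite U_zero ?mul0rn ?add0r ?mul0rn //; lia.
- lia.
Qed.

Lemma WW1 {R : realFieldType} q : (1 <= q)%N -> WW q 1 = UU q 0 *+ 2 :> R.
Proof.
move=> hq; rewrite W_rel //.
case: (ltngtP 1 q) => h.
- by rewrite U_zero // mul0rn add0r.
- lia.
- by rewrite -h mulr0n add0r.
Qed.

Lemma WW0 {R : realFieldType} q : (1 <= q)%N -> WW q 0 = UU q 0 *+ (2 * q) :> R.
Proof.
move=> hq; have h := W0_rel (R:=R) hq.
rewrite WW1 // -mulrnA mulnC mulrnA in h.
have h' := mulrn_inj (ltn0Sn 1) h.
have -> : (2 * q = (2 * q - 1).+1)%N by lia.
by rewrite mulrS h' addrC subrK.
Qed.


Definition VV {R : fieldType} q j i : R :=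
  LAM q ((@uu R) ^+ (2 * q - 1 - 2 * j - 2 * i) * vv ^+ (2 * i) * (uu ^+ 2 - vv ^+ 2) ^+ j).

Lemma VV_val {R : realFieldType} q j : forall i, (j + i < q)%N ->
  VV q j i = if i == 0%N then UU q 0 else 0 :> R.
Proof.
elim: j => [|j IH] i hji.
  rewrite /VV expr0 mulr1 subn0.
  case: eqP => [->|hi]; first by rewrite /UU muln0 subn0.
  by rewrite -(@U_zero R q i) //; lia.
have e : VV q j.+1 i = VV q j i - VV q j i.+1 :> R.
  rewrite /VV -LAMB; congr LAM.
  set c := (2 * q - 1 - 2 * j.+1 - 2 * i)%N.
  rewrite (_ : (2 * q - 1 - 2 * j - 2 * i = c.+2)%N); last by rewrite /c; lia.
  rewrite (_ : (2 * q - 1 - 2 * j - 2 * i.+1 = c)%N); last by rewrite /c; lia.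
  rewrite (_ : (2 * i.+1 = (2 * i).+2)%N); last by lia.
  rewrite !exprS; ring.
rewrite e IH; last by lia.
rewrite IH; last by lia.
by case: eqP => _; rewrite subr0.
Qed.

Lemma lam_X_even {R : fieldType} q n : lam q ('X * (1 - 'X^2) ^+ n) = 0 :> R.
Proof.
have hodd : forall m, odd m -> ((1 - 'X^2) ^+ n : {poly R})`_m = 0.
  elim: n => [|n IH] m hm.
    by rewrite expr0 coef1; case: m hm.
  rewrite exprS mulrBl mul1r coefB coefXnM IH //.
  case: ltnP => h; first by rewrite subr0.
  by rewrite IH ?subr0 //; move: hm h; case: m => [|[|m]] //=; rewrite subn2 /= negbK.
rewrite /lam big1 // => i _; rewrite coefXM.
case: eqP => [_|hi]; first by rewrite mul0r.
case/boolP: (odd i) => oi; first by rewrite lc_odd ?mulr0.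
rewrite hodd ?mul0r //.
by move: oi hi; case: (nat_of_ord i) => [|m] //= ; rewrite negbK.
Qed.

Lemma UU0_sq {R : realFieldType} q : (1 <= q)%N ->
  UU q 0 = lam q ((1 - 'X^2) ^+ q.-1) ^+ 2 :> R.
Proof.
move=> hq.
have := @VV_val R q q.-1 0 ltac:(lia); rewrite eqxx => <-.
rewrite /VV muln0 expr0 mulr1 (_ : (2 * q - 1 - 2 * q.-1 - 0 = 1)%N); last by lia.
rewrite expr1.
have e1 : (@uu R) ^+ 2 - vv ^+ 2 = (1 - 'X^2)^:P * (1 - 'X^2)%:P.
  rewrite rmorphB rmorph1 /= map_polyXn polyCB polyC1 polyC_exp /uu /vv; ring.
rewrite e1 exprMn -!rmorphXn /=.
set F := ((1 - 'X^2) ^+ q.-1 : {poly R}).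
have e2 : (@uu R) * (F^:P * F%:P) = F^:P * F%:P + ('X * F)^:P * ('X * F)%:P.
  rewrite rmorphM /= map_polyX polyCM /uu; ring.
by rewrite e2 LAMD !LAM_sep lam_X_even mulr0 addr0 expr2.
Qed.

Lemma size_XF {R : fieldType} j : (size ('X * (1 - 'X^2) ^+ j : {poly R})%R <= (2 * j).+2)%N.
Proof.
apply: leq_trans (size_polyMleq _ _) _; rewrite size_polyX.
have h1 : (size (1 - 'X^2 : {poly R})%R <= 3)%N.
  apply: leq_trans (size_polyD _ _) _; rewrite size_polyN size_polyXn size_poly1 /=.
  by [].
have h2 := size_poly_exp_leq (1 - 'X^2 : {poly R}) j.
have h3 : ((size (1 - 'X^2 : {poly R})%R).-1 * j <= 2 * j)%N.
  rewrite leq_mul2r; apply/orP; right; move: h1; case: (size _) => //= n; lia.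
rewrite add2n /= ltnS; apply: leq_trans h2 _; by rewrite ltnS.
Qed.

Lemma Lop_XF {R : fieldType} q j :
  Lop q ('X * (1 - 'X^2) ^+ j : {poly R}) =
  (1 - 'X^2) ^+ j.+1 *+ (2 * j + 3) + (1 - 'X^2) ^+ j *+ (2 * q)
  - (1 - 'X^2) ^+ j.+1 *+ (2 * q) - (1 - 'X^2) ^+ j *+ (2 * j + 2).
Proof.
rewrite /Lop derivM derivX deriv_exp derivB derivC derivXn /= expr1 sub0r.
case: j => [|j] /=; rewrite ?mulr0n ?mulr0 ?addr0 ?expr0 ?expr1 ?exprS; ring.
Qed.

Lemma nu_rec {R : realFieldType} q j : (j < q)%N ->
  lam q ((1 - 'X^2) ^+ j.+1) *+ (2 * j + 3) + lam q ((1 - 'X^2) ^+ j) *+ (2 * q)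
  - lam q ((1 - 'X^2) ^+ j.+1) *+ (2 * q) - lam q ((1 - 'X^2) ^+ j) *+ (2 * j + 2) = 0 :> R.
Proof.
move=> hj.
have hs : ((2 * j).+2 <= 2 * q)%N by lia.
have := @lam_Lop R q ('X * (1 - 'X^2) ^+ j) (leq_trans (size_XF j) hs).
by rewrite Lop_XF !lamB lamD !lamMn.
Qed.

Lemma pn_recl {R : fieldType} (a : R) n : pn a n.+1 = a * pn (a + 1) n.
Proof.
rewrite /pn big_ord_recl /= addr0; congr (_ * _); apply: eq_bigr => i _.
by rewrite /= -nat1r addrA.
Qed.

Lemma natr_neq0 {R : realFieldType} n : (n.+1)%:R != 0 :> R.
Proof. by rewrite pnatr_eq0. Qed.
Lemma fact_neq0 {R : realFieldType} n : (n`!)%:R != 0 :> R.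
Proof. by rewrite pnatr_eq0 -lt0n fact_gt0. Qed.

Lemma nu_closed {R : realFieldType} p j : (j <= p)%N ->
  lam p.+1 ((1 - 'X^2) ^+ j) * (p - j)`!%:R = (-1) ^+ p / 2 * pn (2^-1) (p - j) * p`!%:R :> R.
Proof.
have h2 := @two_neq0 R.
elim: j => [|j IH] hj.
  rewrite expr0 lam1 /lc /= subn0 /mu subn0 pn_recl.
  have -> : (- 2^-1 + 1 : R) = 2^-1 by field.
  rewrite /pn big_ord0 exprS; by field.
have hrec := @nu_rec R p.+1 j ltac:(lia).
have IH' := IH ltac:(lia).
move: hrec IH'.
have [r ->] : exists r, p = (j + r).+1 by exists (p - j.+1)%N; lia.
rewrite (_ : ((j + r).+1 - j = r.+1)%N); last by lia.
rewrite (_ : ((j + r).+1 - j.+1 = r)%N); last by lia.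
set n1 := lam _ ((1 - 'X^2) ^+ j.+1).
set n0 := lam _ ((1 - 'X^2) ^+ j).
move=> hrec IH'.
have e1 : n1 = n0 * (2 * r + 2)%:R / (2 * r + 1)%:R.
  apply: (mulIf (natr_neq0 (R:=R) (2 * r))); rewrite addn1 mulfVK ?natr_neq0 //.
  apply/eqP; rewrite -subr_eq0; apply/eqP; rewrite -[RHS]oppr0 -hrec; ring.
have e0 : n0 = (-1) ^+ (j + r).+1 / 2 * pn 2^-1 r.+1 * (j + r).+1`!%:R / (r.+1)`!%:R.
  by rewrite -IH' mulfK ?fact_neq0.
rewrite e1 e0 pnS [(r.+1)`!]factS natrM.
have h3 := natr_neq0 (R:=R) r.
have h4 := natr_neq0 (R:=R) (2 * r).
have h5 := fact_neq0 (R:=R) r.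
rewrite addn1 in h4 *.
field.
apply/and3P; split; [rewrite -natrM nat1r; exact: natr_neq0 | exact: fact_neq0 | rewrite nat1r; exact: natr_neq0].
Qed.

Lemma UU0_val {R : realFieldType} p : UU p.+1 0 = (p`!%:R) ^+ 2 / 4 :> R.
Proof.
rewrite UU0_sq //=.
have := @nu_closed R p p (leqnn p); rewrite subnn /pn big_ord0 mulr1 => ->.
rewrite mulr1.
have h2 := @two_neq0 R.
have e : ((-1) ^+ p : R) ^+ 2 = 1 by rewrite -exprM mulnC exprM expr2 mulN1r opprK expr1n.
rewrite !exprMn e; by field.
Qed.


Lemma rfact_neg {R : fieldType} (n : int) : (n < 0)%R -> rfact n = 0 :> R.
Proof. by case: n => [m|m] h //; lia. Qed.

Lemma H_zero {R : fieldType} q (l1 l2 : int) (k : nat) :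
  (l1 < 0)%R \/ (q%:Z < l1)%R \/ (l2 < 0)%R \/ (q%:Z < l2)%R \/ (q < k)%N ->
  H q l1 l2 k%:Z = 0 :> R.
Proof.
move=> hl.
have : (2 * q%:Z - l1 - l2 - k%:Z < 0)%R \/ (l2 - l1 + k%:Z < 0)%R \/
       (l1 - l2 + k%:Z < 0)%R \/ (l1 + l2 - k%:Z < 0)%R by lia.
rewrite /H; case => [h|[h|[h|h]]]; rewrite (rfact_neg h) ?(mulr0, mul0r) //.
Qed.

Lemma win {R : fieldType} (F : int -> R) (N q : nat) : (q <= N)%N ->
  (forall l : int, (l < 0)%R \/ (q%:Z < l)%R -> F l = 0) ->
  \sum_(i < (N + N).+1) F (i%:Z - N%:Z) = \sum_(l < q.+1) F l%:Z.
Proof.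
move=> hqN hF.
rewrite -(big_mkord xpredT (fun i => F (i%:Z - N%:Z))) -(big_mkord xpredT (fun l => F l%:Z)).
rewrite (@big_cat_nat _ _ _ N 0 (N + N).+1) //=; last by lia.
rewrite (@big_cat_nat _ _ _ (N + q.+1) N (N + N).+1) /=; [|lia|lia].
rewrite [X in X + (_ + _)]big_nat_cond [X in X + (_ + _)]big1; last first.
  move=> i /andP [/andP [_ hi] _]; apply: hF; left; lia.
rewrite [X in _ + (_ + X)]big_nat_cond [X in _ + (_ + X)]big1; last first.
  move=> i /andP [/andP [hi _] _]; apply: hF; right; lia.
rewrite add0r addr0.
rewrite -{1}(add0n N) big_addn.
rewrite (_ : (N + q.+1 - N = q.+1)%N); last by lia.
apply: eq_bigr => i _; congr F; lia.
Qed.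

Lemma S_sum {R : fieldType} q k :
  S q k = \sum_(l1 < q.+1) \sum_(l2 < q.+1) H q l1%:Z l2%:Z k%:Z :> R.
Proof.
rewrite /S /=.
rewrite (@win R (fun l1 => \sum_(j < ((q + k) + (q + k)).+1) H q l1 (j%:Z - (q + k)%:Z) k%:Z) (q + k) q);
  [|lia|].
- apply: eq_bigr => l1 _.
  rewrite (@win R (fun l2 => H q l1%:Z l2 k%:Z) (q + k) q) //; first by lia.
  by move=> l hl; apply: H_zero; lia.
- by move=> l hl; apply: big1 => j _; apply: H_zero; lia.
Qed.

Lemma sum_even_rev {R : fieldType} (F : nat -> R) n : (forall i, odd i -> F i = 0) ->
  \sum_(0 <= i < (2 * n).+1) F i = \sum_(0 <= l < n.+1) F (2 * (n - l))%N.
Proof.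
move=> hF; elim: n => [|n IH]; first by rewrite muln0 !big_nat1.
rewrite (_ : ((2 * n.+1).+1 = ((2 * n).+1).+2)%N); last by lia.
rewrite big_nat_recr // big_nat_recr // IH hF /=; last by rewrite /= oddM.
rewrite addr0 [RHS]big_nat_recl // subn0 addrC; congr (_ + _); congr F; lia.
Qed.

Lemma sum_lc_rev {R : fieldType} q (g : nat -> R) :
  \sum_(i < (2 * q).+1) g i * lc q i = \sum_(l < q.+1) g (2 * (q - l))%N * lc q (2 * (q - l)).
Proof.
rewrite -(big_mkord xpredT (fun i => g i * lc q i)).
rewrite -(big_mkord xpredT (fun l => g (2 * (q - l))%N * lc q (2 * (q - l)))).
by apply: sum_even_rev => i hi; rewrite lc_odd ?mulr0.
Qed.

Lemma LAM_rev {R : fieldType} q (P : {poly {poly R}}) :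
  LAM q P = \sum_(l1 < q.+1) \sum_(l2 < q.+1)
     (P`_(2 * (q - l1)))`_(2 * (q - l2)) * lc q (2 * (q - l2)) * lc q (2 * (q - l1)).
Proof.
rewrite /LAM (sum_lc_rev q (fun i => lam q P`_i)); apply: eq_bigr => l1 _.
by rewrite /lam sum_lc_rev mulr_suml.
Qed.

Lemma sum2_delta {R : fieldType} (m n a b : nat) (P : bool) (f : nat -> nat -> R) :
  \sum_(s < m) \sum_(t < n) (if [&& s == a :> nat, t == b :> nat & P] then f s t else 0)
  = if [&& (a < m)%N, (b < n)%N & P] then f a b else 0.
Proof.
case: P; last first.
  rewrite !andbF big1 // => s _; rewrite big1 // => t _; by rewrite !andbF.
transitivity (\sum_(s < m) (if s == a :> nat then \sum_(t < n) (if t == b :> nat then f s t else 0) else 0)).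
  apply: eq_bigr => s _; case: eqP => [_|_] /=.
    by apply: eq_bigr => t _; rewrite andbT.
  by rewrite big1.
rewrite (sum_delta _ _ (fun s => \sum_(t < n) (if t == b :> nat then f s t else 0))).
rewrite (sum_delta _ _ (fun t => f a t)).
by case: (a < m)%N; case: (b < n)%N.
Qed.

Lemma uv_expand {R : fieldType} A B :
  (@uu R) ^+ A * vv ^+ B = \sum_(s < A.+1) \sum_(t < B.+1)
     (('X^(s + t))%:P * 'X^(s + (B - t))) *+ ('C(A, s) * 'C(B, t)).
Proof.
rewrite /uu addrC exprD1n /vv exprDn big_distrl /=; apply: eq_bigr => s _.
rewrite big_distrr /=; apply: eq_bigr => t _.
rewrite mulrnAl mulrnAr -mulrnA mulnC; congr (_ *+ _).
rewrite polyC_exp !exprD exprMn; ring.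
Qed.

Lemma coef_XY {R : fieldType} (a m n i j : nat) :
  (((('X^a)%:P * 'X^m) *+ n : {poly {poly R}})`_i)`_j
  = if (i == m) && (j == a) then n%:R else 0.
Proof.
rewrite coefMn coefCM coefXn mulr_natr coefMn coefMn coefXn.
by case: (i == m); case: (j == a); rewrite /= ?mulr0n ?mul0rn ?mulr1n.
Qed.

Lemma coef_uv {R : fieldType} A B i j :
  (((@uu R) ^+ A * vv ^+ B)`_i)`_j = \sum_(s < A.+1) \sum_(t < B.+1)
     (if ((i == s + (B - t)) && (j == s + t))%N then ('C(A, s) * 'C(B, t))%:R else 0).
Proof.
rewrite uv_expand coef_sum coef_sum; apply: eq_bigr => s _.
rewrite coef_sum coef_sum; apply: eq_bigr => t _.
by rewrite coef_XY.
Qed.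

Lemma coef_uv_val {R : fieldType} q k l1 l2 : (k <= q)%N -> (l1 <= q)%N -> (l2 <= q)%N ->
  (((@uu R) ^+ (2 * q - 2 * k) * vv ^+ (2 * k))`_(2 * (q - l1)))`_(2 * (q - l2)) =
  if [&& (k <= l1 + l2), (l1 + l2 + k <= 2 * q), (l2 <= l1 + k) & (l1 <= l2 + k)]%N
  then ('C(2 * q - 2 * k, 2 * q - l1 - l2 - k) * 'C(2 * k, l1 + k - l2))%:R else 0.
Proof.
move=> hk h1 h2.
transitivity (if [&& (2 * q - l1 - l2 - k < (2 * q - 2 * k).+1)%N, (l1 + k - l2 < (2 * k).+1)%N &
    [&& (k <= l1 + l2), (l1 + l2 + k <= 2 * q), (l2 <= l1 + k) & (l1 <= l2 + k)]%N]
  then ('C(2 * q - 2 * k, 2 * q - l1 - l2 - k) * 'C(2 * k, l1 + k - l2))%:R else 0 : R).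
  rewrite coef_uv.
  rewrite -(sum2_delta _ _ _ _ _ (fun s t => ('C(2 * q - 2 * k, s) * 'C(2 * k, t))%:R)).
  apply: eq_bigr => s _; apply: eq_bigr => t _.
  have ht := ltn_ord t; have hs := ltn_ord s.
  congr (if _ then _ else _).
  by apply/idP/idP => h; lia.
case: ifP => hv; case: ifP => hv' //; exfalso.
- by move/negbT: hv' => hv'; lia.
- by move/negbT: hv => hv; lia.
Qed.

Lemma H_val {R : realFieldType} q k l1 l2 : (k <= q)%N -> (l1 <= q)%N -> (l2 <= q)%N ->
  H q l1%:Z l2%:Z k%:Z = lc q (2 * (q - l1)) * lc q (2 * (q - l2)) *
     (((@uu R) ^+ (2 * q - 2 * k) * vv ^+ (2 * k))`_(2 * (q - l1)))`_(2 * (q - l2))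
     / ((2 * q - 2 * k)`!%:R * (2 * k)`!%:R).
Proof.
move=> hk h1 h2.
rewrite coef_uv_val //.
have hl : forall l, (l <= q)%N -> lc q (2 * (q - l)) = (-1) ^+ l * pn (- 2^-1) l * pn (2^-1) (q - l) :> R.
  move=> l hl; rewrite (_ : (2 * (q - l) = (q - l).*2)%N); last by rewrite mul2n.
  rewrite lc_even ?leq_subr // /mu (_ : (q - (q - l) = l)%N) //; lia.
rewrite (hl l1 h1) (hl l2 h2) /H -PoszD (subzn h1) (subzn h2) -exprnP exprD /poch.
rewrite -/(pn (- 2^-1) l1) -/(pn (- 2^-1) l2) -/(pn (2^-1) (q - l1)) -/(pn (2^-1) (q - l2)).
case: ifP => hv; last first.
  have : (2 * q%:Z - l1%:Z - l2%:Z - k%:Z < 0)%R \/ (l2%:Z - l1%:Z + k%:Z < 0)%R \/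
       (l1%:Z - l2%:Z + k%:Z < 0)%R \/ (l1%:Z + l2%:Z - k%:Z < 0)%R.
    by move/negbT: hv; lia.
  case => [h|[h|[h|h]]]; rewrite (rfact_neg h) ?(mulr0, mul0r) //.
rewrite (_ : 2 * q%:Z - l1%:Z - l2%:Z - k%:Z = (2 * q - l1 - l2 - k)%N); last by lia.
rewrite (_ : l2%:Z - l1%:Z + k%:Z = (2 * k - (l1 + k - l2))%N); last by lia.
rewrite (_ : l1%:Z - l2%:Z + k%:Z = (l1 + k - l2)%N); last by lia.
rewrite (_ : l1%:Z + l2%:Z - k%:Z = (2 * q - 2 * k - (2 * q - l1 - l2 - k))%N); last by lia.
rewrite /rfact natrM.
have b1 := @bin_fact (2 * q - 2 * k) (2 * q - l1 - l2 - k) ltac:(lia).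
have b2 := @bin_fact (2 * k) (l1 + k - l2) ltac:(lia).
have e1 : ('C(2 * q - 2 * k, 2 * q - l1 - l2 - k))%:R = (2 * q - 2 * k)`!%:R /
   ((2 * q - l1 - l2 - k)`!%:R * (2 * q - 2 * k - (2 * q - l1 - l2 - k))`!%:R) :> R.
  by rewrite -b1 !natrM mulfK // mulf_neq0 // fact_neq0.
have e2 : ('C(2 * k, l1 + k - l2))%:R = (2 * k)`!%:R /
   ((l1 + k - l2)`!%:R * (2 * k - (l1 + k - l2))`!%:R) :> R.
  by rewrite -b2 !natrM mulfK // mulf_neq0 // fact_neq0.
rewrite e1 e2.
have f1 := @fact_neq0 R (2 * q - 2 * k).
have f2 := @fact_neq0 R (2 * k).
have f3 := @fact_neq0 R (2 * q - l1 - l2 - k).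
have f4 := @fact_neq0 R (2 * q - 2 * k - (2 * q - l1 - l2 - k)).
have f5 := @fact_neq0 R (l1 + k - l2).
have f6 := @fact_neq0 R (2 * k - (l1 + k - l2)).
by field; rewrite ?f1 ?f2 ?f3 ?f4 ?f5 ?f6.
Qed.

Lemma S_bridge {R : realFieldType} q k : (k <= q)%N ->
  S q k = WW q k / ((2 * q - 2 * k)`!%:R * (2 * k)`!%:R) :> R.
Proof.
move=> hk.
rewrite S_sum /WW /TT LAM_rev mulr_suml; apply: eq_bigr => l1 _.
rewrite mulr_suml; apply: eq_bigr => l2 _.
have h1 := ltn_ord l1; have h2 := ltn_ord l2.
rewrite H_val //; ring.
Qed.

Lemma S_big {R : fieldType} q k : (q < k)%N -> S q k = 0 :> R.
Proof.
move=> hk; rewrite S_sum big1 // => l1 _; rewrite big1 // => l2 _.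
by apply: H_zero; right; right; right; right.
Qed.


Lemma S_zero2 {R : realFieldType} q k : (1 <= q)%N -> (2 <= k)%N -> S q k = 0 :> R.
Proof.
move=> hq hk; case: (leqP k q) => h.
  by rewrite S_bridge // WW_zero // mul0r.
exact: S_big.
Qed.

Lemma S0_val {R : realFieldType} p :
  S p.+1 0 = (p`!%:R) ^+ 2 / 4 * (2 * p.+1)%:R / (2 * p.+1)`!%:R :> R.
Proof.
rewrite S_bridge // WW0 // UU0_val muln0 subn0 fact0 mulr1.
by rewrite [in RHS]mulr_natr.
Qed.

Lemma S1_val {R : realFieldType} p :
  S p.+1 1 = (p`!%:R) ^+ 2 / 4 / (2 * p)`!%:R :> R.
Proof.
rewrite S_bridge // WW1 // UU0_val.
rewrite (_ : (2 * p.+1 - 2 * 1 = 2 * p)%N); last by lia.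
have h2 := @two_neq0 R.
have f := @fact_neq0 R (2 * p).
rewrite (_ : ((2 * 1)`! = 2)%N) //.
by field; rewrite f.
Qed.

Unset Implicit Arguments.

Theorem lemma7p5 (R : realFieldType) (q k : nat) :
  (1 <= q)%N -> k != (q + 2)%N ->
  let qr : R := q%:R in
  let kr : R := k%:R in
  qr ^+ 2 / (8 * (2 * kr - 2 * qr - 3) * (kr - qr - 2)) * S q k
  + (4 * kr * qr - 4 * qr ^+ 2 + 2 * kr - 7 * qr - 4)
      / (4 * (2 * kr - 2 * qr - 3) * (kr - qr - 2)) * S q.+1 k
  + S q.+2 k = 0.
Proof.
move=> hq hk qr kr.
case: (leqP 2 k) => hk2.
  by rewrite !S_zero2 // ?mulr0 ?addr0.
have [p ep] : exists p, q = p.+1 by exists q.-1; lia.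
rewrite /qr /kr ep; clear qr kr.
have hp0 : (0 : R) <= p%:R := ler0n _ _.
case: k hk hk2 => [|[|k]] hk hk2 //.
- rewrite !S0_val.
  rewrite (_ : (2 * p.+2 = (2 * p.+1).+2)%N); last by lia.
  rewrite (_ : (2 * p.+3 = (2 * p.+1).+4)%N); last by lia.
  have hX := @fact_neq0 R p.
  have hF := @fact_neq0 R (2 * p.+1).
  move: hF; move Em: (2 * p.+1)%N => m hF.
  rewrite !factS !natrM.
  move: hX hF; move: (p`!%:R : R) => X; move: (m`!%:R : R) => F hX hF.
  rewrite -Em.
  field.
  by repeat (apply/andP; split); rewrite ?hX ?hF //; apply/eqP => h; clear -h hp0; lra.
- rewrite !S1_val.
  rewrite (_ : (2 * p.+1 = (2 * p).+2)%N); last by lia.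
  rewrite (_ : (2 * p.+2 = (2 * p).+4)%N); last by lia.
  have hX := @fact_neq0 R p.
  have hF := @fact_neq0 R (2 * p).
  move: hF; move Em: (2 * p)%N => m hF.
  rewrite !factS !natrM.
  move: hX hF; move: (p`!%:R : R) => X; move: (m`!%:R : R) => F hX hF.
  rewrite -Em.
  field.
  by repeat (apply/andP; split); rewrite ?hX ?hF //; apply/eqP => h; clear -h hp0; lra.
Qed.
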